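(* Let $\nu\in P$ and let $F:[0,1]\cap\mathbb Q\to\mathbb Q$ be a piecewise linear continuous map with $F(0)=0$ and $F(1)\in a_0^{-1}\mathbb Z$. Then the path $t\mapsto t\nu+F(t)\delta$ is extremal.
   Context: $\mathfrak g$ is an affine Lie algebra over $\mathbb Q$ of affine type with index set $I$, simple coroots $h_j$, fundamental weights $\Lambda_j$, null root $\delta$, $a_0=2$ if $\mathfrak g$ is of type $A^{(2)}_{2\ell}$ and $a_0=1$ otherwise, Weyl group $W=\langle r_j\mid j\in I\rangle$, weight lattice $P=\bigoplus_j\mathbb Z\Lambda_j\oplus\mathbb Za_0^{-1}\delta$. $\mathbb P$ is the set of piecewise linear continuous maps $\pi:[0,1]\cap\mathbb Q\to\mathbb Q\otimes P$ with $\pi(0)=0$, $\pi(1)\in P$. $e_j,f_j$ ($j\in I$) are Littelmann's root operators on $\mathbb P\cup\{\mathbf0\}$. For $j\in I$, $S_j\pi=f_j^n\pi$ if $n=\pi(1)(h_j)\ge0$ and $S_j\pi=e_j^{-n}\pi$ if $n<0$; $w\mapsto S_w$ is the action of $W$ on $\mathbb P$ with $S_{r_j}=S_j$. A path $\pi\in\mathbb P$ is extremal if for every $w\in W$ and every $j\in I$, either $e_jS_w\pi=\mathbf0$ or $f_jS_w\pi=\mathbf0$. *)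

(* Defs.v *)
From Stdlib Require Import Classical ClassicalEpsilon.
From HB Require Import structures.
From mathcomp Require Import all_boot all_order all_algebra.
Set Implicit Arguments. Unset Strict Implicit. Unset Printing Implicit Defensive.
Import Order.TTheory GRing.Theory Num.Theory.
Local Open Scope ring_scope.

Definition the_min (P : rat -> Prop) : option rat :=
  match excluded_middle_informative
          (exists x : rat, P x /\ forall y, P y -> x <= y) with
  | left h => Some (proj1_sig (constructive_indefinite_description _ h))
  | right _ => None
  end.

Definition the_max (P : rat -> Prop) : option rat :=
  match excluded_middle_informative
          (exists x : rat, P x /\ forall y, P y -> y <= x) with
  | left h => Some (proj1_sig (constructive_indefinite_description _ h))
  | right _ => None
  end.

(* Index set I = {0,...,n} = 'I_n.+1, the distinguished node is ord0. *)
Definition is_GCM (n : nat) (A : 'M[int]_n.+1) : Prop :=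
  (forall i, A i i = 2) /\
  (forall i j, i != j -> A i j <= 0) /\
  (forall i j, (A i j == 0) = (A j i == 0)).

Definition indecomposable (n : nat) (A : 'M[int]_n.+1) : Prop :=
  forall J : {set 'I_n.+1}, J != set0 -> J != setT ->
    exists i j, [/\ i \in J, j \notin J & A i j != 0].

Definition affine_type (n : nat) (A : 'M[int]_n.+1) : Prop :=
  let Aq := map_mx (fun z : int => z%:~R : rat) A in
  [/\ \rank Aq = n,
      exists u : 'cV[rat]_n.+1, (forall i, 0 < u i 0) /\ Aq *m u = 0 &
      forall v : 'cV[rat]_n.+1, (forall i, 0 <= (Aq *m v) i 0) -> Aq *m v = 0].

Definition affine_GCM (n : nat) (A : 'M[int]_n.+1) : Prop :=
  [/\ is_GCM A, indecomposable A & affine_type A].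

Definition prim_null (n : nat) (A : 'M[int]_n.+1) (a : 'I_n.+1 -> nat) : Prop :=
  [/\ forall i, (0 < a i)%N,
      forall i, \sum_j A i j * (a j)%:Z = 0 &
      \big[gcdn/0%N]_i a i = 1%N].

(* Kac's numbering of the node 0 and the number a_0:
   a = labels (delta = sum a_i alpha_i), av = dual labels (K = sum av_i h_i);
   node 0 has av_0 = 1, a0 = a_0, and a0 = 1 unless no node has a_i = av_i = 1
   (which happens exactly for type A^(2)_(2l), where a_0 = 2). *)
Definition kac_a0 (n : nat) (A : 'M[int]_n.+1) (a0 : nat) : Prop :=
  exists a av : 'I_n.+1 -> nat,
    [/\ prim_null A a, prim_null A^T av, av ord0 = 1%N, a ord0 = a0 &
        (a0 = 1%N \/ ~ exists i, a i = 1%N /\ av i = 1%N)].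

(* An element of Q (x) P is sum_j lam_j Lambda_j + c delta, stored as (lam, c). *)
Notation wt n := ({ffun 'I_n.+1 -> rat^o} * rat^o)%type.

Definition delta (n : nat) : wt n := (0, 1).

(* pairing with the simple coroot h_j: <Lambda_i,h_j> = [i==j], <delta,h_j> = 0 *)
Definition pair_h (n : nat) (j : 'I_n.+1) (x : wt n) : rat := x.1 j.

Definition in_P (n : nat) (a0 : nat) (x : wt n) : Prop :=
  (forall j, exists z : int, x.1 j = z%:~R) /\
  exists z : int, x.2 = z%:~R / a0%:R.

Definition alpha (n : nat) (A : 'M[int]_n.+1) (a0 : nat) (j : 'I_n.+1) : wt n :=
  ([ffun i => (A i j)%:~R], if j == ord0 then a0%:R^-1 else 0).

Definition refl (n : nat) (A : 'M[int]_n.+1) (a0 : nat) (j : 'I_n.+1) (x : wt n)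
  : wt n := x - pair_h j x *: alpha A a0 j.

Definition piecewise_linear (V : lmodType rat) (p : rat -> V) : Prop :=
  exists s : seq rat,
    [/\ path <%R 0 s, last 0 s = 1 &
        forall a b, (a, b) \in zip (0 :: s) s ->
          forall t, a <= t <= b ->
            p t = p a + ((t - a) / (b - a)) *: (p b - p a)].

Notation lpath n := (rat -> wt n).

Definition is_path (n : nat) (a0 : nat) (p : lpath n) : Prop :=
  [/\ piecewise_linear p, p 0 = 0 & in_P a0 (p 1)].

Definition Hfun (n : nat) (j : 'I_n.+1) (p : lpath n) (t : rat) : rat :=
  pair_h j (p t).

Definition minH (n : nat) (j : 'I_n.+1) (p : lpath n) : option rat :=
  the_min (fun x => exists t, 0 <= t <= 1 /\ Hfun j p t = x).

Definition e_op (n : nat) (A : 'M[int]_n.+1) (a0 : nat) (j : 'I_n.+1)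
  (p : lpath n) : option (lpath n) :=
  match minH j p with
  | None => None
  | Some m =>
    if -1 < m then None else
    match the_min (fun t => 0 <= t <= 1 /\ Hfun j p t = m) with
    | None => None
    | Some t1 =>
      match the_max (fun t => 0 <= t <= t1 /\ Hfun j p t = m + 1) with
      | None => None
      | Some t0 =>
        Some (fun t => if t <= t0 then p t
                       else if t <= t1 then p t0 + refl A a0 j (p t - p t0)
                       else p t + alpha A a0 j)
      end
    end
  end.

Definition f_op (n : nat) (A : 'M[int]_n.+1) (a0 : nat) (j : 'I_n.+1)
  (p : lpath n) : option (lpath n) :=
  match minH j p with
  | None => None
  | Some m =>
    if Hfun j p 1 - m < 1 then None else
    match the_max (fun t => 0 <= t <= 1 /\ Hfun j p t = m) with
    | None => None
    | Some t0 =>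
      match the_min (fun t => t0 <= t <= 1 /\ Hfun j p t = m + 1) with
      | None => None
      | Some t1 =>
        Some (fun t => if t <= t0 then p t
                       else if t <= t1 then p t0 + refl A a0 j (p t - p t0)
                       else p t - alpha A a0 j)
      end
    end
  end.

Fixpoint iter_op (n : nat) (g : lpath n -> option (lpath n)) (k : nat)
  (p : lpath n) : option (lpath n) :=
  match k with
  | 0 => Some p
  | k.+1 => obind g (iter_op g k p)
  end.

Definition S_op (n : nat) (A : 'M[int]_n.+1) (a0 : nat) (j : 'I_n.+1)
  (p : lpath n) : option (lpath n) :=
  let N := numq (pair_h j (p 1)) in
  if (0 <= N)%R then iter_op (f_op A a0 j) `|N|%N p
  else iter_op (e_op A a0 j) `|N|%N p.

(* S_w for w = r_{j_1} ... r_{j_k}, given as the word [:: j_1; ...; j_k] *)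
Definition S_word (n : nat) (A : 'M[int]_n.+1) (a0 : nat) (w : seq 'I_n.+1)
  (p : lpath n) : option (lpath n) :=
  foldr (fun j acc => obind (S_op A a0 j) acc) (Some p) w.

Definition extremal (n : nat) (A : 'M[int]_n.+1) (a0 : nat) (p : lpath n) : Prop :=
  forall (w : seq 'I_n.+1) (j : 'I_n.+1) (q : lpath n),
    S_word A a0 w p = Some q -> e_op A a0 j q = None \/ f_op A a0 j q = None.

(* Main.v *)
Require Import Defs.
From Stdlib Require Import Classical ClassicalEpsilon.
From HB Require Import structures.
From mathcomp Require Import all_boot all_order all_algebra.
From mathcomp Require Import lra.
Import Order.TTheory GRing.Theory Num.Theory.
Set Implicit Arguments. Unset Strict Implicit.
Local Open Scope ring_scope.
Lemma the_min_eq (P : rat -> Prop) x : P x -> (forall y, P y -> x <= y) ->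
  the_min P = Some x.
Proof.
move=> Px Hx; rewrite /the_min.
case: excluded_middle_informative => [h|h]; last by exfalso; apply: h; exists x.
case: constructive_indefinite_description => y [Py Hy] /=.
by congr Some; apply/le_anti; rewrite Hx // Hy.
Qed.

Lemma the_max_eq (P : rat -> Prop) x : P x -> (forall y, P y -> y <= x) ->
  the_max P = Some x.
Proof.
move=> Px Hx; rewrite /the_max.
case: excluded_middle_informative => [h|h]; last by exfalso; apply: h; exists x.
case: constructive_indefinite_description => y [Py Hy] /=.
by congr Some; apply/le_anti; rewrite Hx // Hy.
Qed.

Lemma f_op_eq n (A : 'M[int]_n.+1) a0 j (q : lpath n) mn t0 t1 :
  (forall t, 0 <= t <= 1 -> mn <= Hfun j q t) ->
  0 <= t0 <= 1 -> Hfun j q t0 = mn ->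
  (forall t, 0 <= t <= 1 -> Hfun j q t = mn -> t <= t0) ->
  ~~ (Hfun j q 1 - mn < 1) ->
  t0 <= t1 <= 1 -> Hfun j q t1 = mn + 1 ->
  (forall t, t0 <= t <= 1 -> Hfun j q t = mn + 1 -> t1 <= t) ->
  f_op A a0 j q = Some (fun t => if t <= t0 then q t
                       else if t <= t1 then q t0 + refl A a0 j (q t - q t0)
                       else q t - alpha A a0 j).
Proof.
move=> Hmin Ht0 Ht0e Ht0m H1 Ht1 Ht1e Ht1m.
rewrite /f_op /minH.
rewrite (@the_min_eq _ mn); first last.
- by move=> y [t [Ht <-]]; apply: Hmin.
- by exists t0.
rewrite (negbTE H1).
rewrite (@the_max_eq _ t0); first last.
- by move=> y [Hy Hye]; apply: Ht0m.
- by [].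
rewrite (@the_min_eq _ t1) //; first by move=> y [Hy Hye]; apply: Ht1m.
Qed.

Lemma e_op_eq n (A : 'M[int]_n.+1) a0 j (q : lpath n) mn t0 t1 :
  (forall t, 0 <= t <= 1 -> mn <= Hfun j q t) ->
  ~~ (-1 < mn) ->
  0 <= t1 <= 1 -> Hfun j q t1 = mn ->
  (forall t, 0 <= t <= 1 -> Hfun j q t = mn -> t1 <= t) ->
  0 <= t0 <= t1 -> Hfun j q t0 = mn + 1 ->
  (forall t, 0 <= t <= t1 -> Hfun j q t = mn + 1 -> t <= t0) ->
  e_op A a0 j q = Some (fun t => if t <= t0 then q t
                       else if t <= t1 then q t0 + refl A a0 j (q t - q t0)
                       else q t + alpha A a0 j).
Proof.
move=> Hmin H1 Ht1 Ht1e Ht1m Ht0 Ht0e Ht0m.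
rewrite /e_op /minH.
rewrite (@the_min_eq _ mn); first last.
- by move=> y [t [Ht <-]]; apply: Hmin.
- by exists t1.
rewrite (negbTE H1).
rewrite (@the_min_eq _ t1); first last.
- by move=> y [Hy Hye]; apply: Ht1m.
- by [].
rewrite (@the_max_eq _ t0) //; first by move=> y [Hy Hye]; apply: Ht0m.
Qed.
Definition pth n (mu : wt n) (F : rat -> rat^o) : lpath n :=
  fun t => t *: mu + F t *: delta n.

Lemma pair_hD n j (x y : wt n) : pair_h j (x + y) = pair_h j x + pair_h j y.
Proof. by rewrite /pair_h /= ffunE. Qed.
Lemma pair_hZ n j c (x : wt n) : pair_h j (c *: x) = c * pair_h j x.
Proof. by rewrite /pair_h /= ffunE. Qed.
Lemma pair_hN n j (x : wt n) : pair_h j (- x) = - pair_h j x.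
Proof. by rewrite /pair_h /= ffunE. Qed.
Lemma pair_h_delta n j : pair_h j (delta n) = 0.
Proof. by rewrite /pair_h /= ffunE. Qed.
Lemma pair_h_alpha n (A : 'M[int]_n.+1) a0 j : pair_h j (alpha A a0 j) = (A j j)%:~R.
Proof. by rewrite /pair_h /= ffunE. Qed.

Lemma Hfun_form n (A : 'M[int]_n.+1) (a0 : nat) j (mu : wt n) (F : rat -> rat^o) (q : lpath n) t c :
  A j j = 2 -> q t = pth mu F t - c *: alpha A a0 j ->
  Hfun j q t = t * mu.1 j - 2 * c.
Proof.
move=> Ajj Hq; rewrite /Hfun Hq /pth pair_hD pair_hN !pair_hZ pair_hD !pair_hZ.
rewrite pair_h_delta pair_h_alpha Ajj /pair_h; lra.
Qed.

Lemma refl_step n (A : 'M[int]_n.+1) (a0 : nat) j (q : lpath n) t t0 P c d :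
  q t = P - c *: alpha A a0 j -> Hfun j q t - Hfun j q t0 = d ->
  q t0 + refl A a0 j (q t - q t0) = P - (c + d) *: alpha A a0 j.
Proof.
move=> Hq Hd; rewrite /refl pair_hD pair_hN.
have -> : pair_h j (q t) + - pair_h j (q t0) = d by rewrite -Hd.
rewrite addrC addrAC subrK Hq scalerDl opprD addrA.
by [].
Qed.

Lemma minus_alpha n (A : 'M[int]_n.+1) (a0 : nat) j (q : lpath n) t P c :
  q t = P - c *: alpha A a0 j -> q t - alpha A a0 j = P - (c + 1) *: alpha A a0 j.
Proof. by move=> Hq; rewrite Hq scalerDl scale1r opprD addrA. Qed.

Lemma plus_alpha n (A : 'M[int]_n.+1) (a0 : nat) j (q : lpath n) t P c :
  q t = P - c *: alpha A a0 j -> q t + alpha A a0 j = P - (c - 1) *: alpha A a0 j.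
Proof. by move=> Hq; rewrite Hq scalerDl scaleN1r opprD opprK addrA. Qed.
Definition cf (M k : nat) (t : rat) : rat :=
  if t * M%:R <= k%:R then t * M%:R else k%:R.

Definition Rf n (A : 'M[int]_n.+1) (a0 : nat) j (mu : wt n) (F : rat -> rat^o)
  (M k : nat) (q : lpath n) : Prop :=
  forall t, 0 <= t <= 1 -> q t = pth mu F t - cf M k t *: alpha A a0 j.

Lemma f_step n (A : 'M[int]_n.+1) (a0 : nat) j (mu : wt n) (F : rat -> rat^o)
  (M k : nat) (q : lpath n) :
  A j j = 2 -> mu.1 j = M%:R -> (k < M)%N -> Rf A a0 j mu F M k q ->
  exists q', f_op A a0 j q = Some q' /\ Rf A a0 j mu F M k.+1 q'.
Proof.
move=> Ajj Hm kM Hq.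
have Mpos : 0 < (M%:R : rat) by rewrite ltr0n; apply: leq_ltn_trans kM.
have MN0 : (M%:R : rat) != 0 by rewrite gt_eqF.
have kM' : (k%:R : rat) + 1 <= M%:R by rewrite natr1 ler_nat.
have k0 : (0 : rat) <= k%:R by rewrite ler0n.
have HH : forall t, 0 <= t <= 1 -> Hfun j q t = t * M%:R - 2 * cf M k t.
  by move=> t Ht; rewrite (Hfun_form Ajj (Hq t Ht)) Hm.
have Hs : forall t : rat, 0 <= t <= 1 -> 0 <= t * M%:R <= M%:R.
  move=> t /andP[t0 t1]; apply/andP; split; first by rewrite mulr_ge0 // ltW.
  by rewrite ler_piMl // ltW.
have Ht0 : 0 <= (k%:R : rat) / M%:R <= 1.
  apply/andP; split; first by rewrite divr_ge0 // ltW.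
  rewrite ler_pdivrMr // mul1r; lra.
have Ht1 : ((k%:R : rat) + 1) / M%:R <= 1 by rewrite ler_pdivrMr // mul1r.
have Ht01 : (k%:R : rat) / M%:R <= (k%:R + 1) / M%:R.
  by rewrite ler_pdivrMr // divfK //; lra.
have Ht1' : 0 <= ((k%:R : rat) + 1) / M%:R <= 1.
  rewrite Ht1 andbT divr_ge0 // ?ltW //; lra.
eexists; split.
  apply: (@f_op_eq _ _ _ _ _ (- (k%:R : rat)) (k%:R / M%:R) ((k%:R + 1) / M%:R)).
  - move=> t Ht; rewrite HH // /cf; have /andP[? ?] := Hs t Ht; case: (leP (t * M%:R) k%:R) => ?; lra.
  - by [].
  - rewrite HH // /cf divfK // lexx; lra.
  - move=> t Ht; rewrite HH // /cf ler_pdivlMr //; have /andP[? ?] := Hs t Ht.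
    case: (leP (t * M%:R) k%:R) => ?; lra.
  - rewrite HH ?lexx ?ler01 // /cf mul1r; case: (leP (M%:R : rat) k%:R) => ?; lra.
  - by rewrite Ht01 Ht1.
  - rewrite HH // /cf divfK //; case: (leP ((k%:R : rat) + 1) k%:R) => ?; lra.
  - move=> t /andP[Ht Ht']; have Ht2 : 0 <= t <= 1.
      by rewrite Ht' andbT; apply: le_trans Ht; case/andP: Ht0.
    rewrite HH // /cf ler_pdivrMr //; move: Ht; rewrite ler_pdivrMr // => Ht.
    have /andP[? ?] := Hs t Ht2; case: (leP (t * M%:R) k%:R) => ?; lra.
move=> t Ht /=.
have /andP[Hs1 Hs2] := Hs t Ht.
case: ifP => H1.
  rewrite (Hq t Ht); congr (_ - _ *: _).
  move: H1; rewrite ler_pdivlMr // /cf => H1; rewrite H1.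
  case: leP => ?; lra.
move: H1; rewrite ler_pdivlMr // => H1.
have H1' : k%:R < t * M%:R by rewrite ltNge H1.
case: ifP => H2.
  rewrite (@refl_step _ _ _ _ _ _ _ _ (cf M k t) (t * M%:R - k%:R) (Hq t Ht)).
    congr (_ - _ *: _).
    move: H2; rewrite ler_pdivlMr // /cf -natr1 => H2.
    rewrite H2 H1; lra.
  rewrite HH // HH // /cf divfK // lexx H1; lra.
move: H2; rewrite ler_pdivlMr // => H2.
rewrite (minus_alpha (Hq t Ht)); congr (_ - _ *: _).
rewrite /cf -natr1 H1 H2; lra.
Qed.
Definition ce (M k : nat) (t : rat) : rat :=
  if t * M%:R <= M%:R - k%:R then 0 else M%:R - k%:R - t * M%:R.

Definition ReP n (A : 'M[int]_n.+1) (a0 : nat) j (mu : wt n) (F : rat -> rat^o)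
  (M k : nat) (q : lpath n) : Prop :=
  forall t, 0 <= t <= 1 -> q t = pth mu F t - ce M k t *: alpha A a0 j.

Lemma e_step n (A : 'M[int]_n.+1) (a0 : nat) j (mu : wt n) (F : rat -> rat^o)
  (M k : nat) (q : lpath n) :
  A j j = 2 -> mu.1 j = - M%:R -> (k < M)%N -> ReP A a0 j mu F M k q ->
  exists q', e_op A a0 j q = Some q' /\ ReP A a0 j mu F M k.+1 q'.
Proof.
move=> Ajj Hm kM Hq.
have Mpos : 0 < (M%:R : rat) by rewrite ltr0n; apply: leq_ltn_trans kM.
have MN0 : (M%:R : rat) != 0 by rewrite gt_eqF.
have kM' : (k%:R : rat) + 1 <= M%:R by rewrite natr1 ler_nat.
have k0 : (0 : rat) <= k%:R by rewrite ler0n.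
have HH : forall t, 0 <= t <= 1 -> Hfun j q t = - (t * M%:R) - 2 * ce M k t.
  by move=> t Ht; rewrite (Hfun_form Ajj (Hq t Ht)) Hm mulrN.
have Hs : forall t : rat, 0 <= t <= 1 -> 0 <= t * M%:R <= M%:R.
  move=> t /andP[t0 t1]; apply/andP; split; first by rewrite mulr_ge0 // ltW.
  by rewrite ler_piMl // ltW.
set T1 := ((M%:R : rat) - k%:R) / M%:R.
set T0 := ((M%:R : rat) - k%:R - 1) / M%:R.
have T1M : T1 * M%:R = M%:R - k%:R by rewrite /T1 divfK.
have T0M : T0 * M%:R = M%:R - k%:R - 1 by rewrite /T0 divfK.
have Ht1 : 0 <= T1 <= 1.
  apply/andP; split; first by apply: divr_ge0; lra.
  rewrite ler_pdivrMr // mul1r; lra.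
have Ht0 : 0 <= T0 <= T1.
  apply/andP; split; first by apply: divr_ge0; lra.
  rewrite ler_pdivrMr // T1M; lra.
have Ht0' : 0 <= T0 <= 1.
  case/andP: Ht0 => -> /le_trans -> //; by case/andP: Ht1.
eexists; split.
  apply: (@e_op_eq _ _ _ _ _ ((k%:R : rat) - M%:R) T0 T1).
  - move=> t Ht; rewrite HH // /ce; have /andP[? ?] := Hs t Ht.
    case: (leP (t * M%:R) (M%:R - k%:R)) => ?; lra.
  - rewrite -leNgt; lra.
  - by [].
  - rewrite HH // /ce T1M lexx; lra.
  - move=> t Ht; rewrite HH // /ce /T1 ler_pdivrMr //; have /andP[? ?] := Hs t Ht.
    case: (leP (t * M%:R) (M%:R - k%:R)) => ?; lra.
  - by [].
  - rewrite HH // /ce T0M; case: (leP ((M%:R : rat) - k%:R - 1) (M%:R - k%:R)) => ?; lra.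
  - move=> t /andP[Ht Ht']; have Ht2 : 0 <= t <= 1.
      rewrite Ht /=; apply: le_trans Ht' _; by case/andP: Ht1.
    rewrite HH // /ce /T0 ler_pdivlMr //; move: Ht'; rewrite /T1 ler_pdivlMr // => Ht'.
    have /andP[? ?] := Hs t Ht2; case: (leP (t * M%:R) (M%:R - k%:R)) => ?; lra.
move=> t Ht /=.
have /andP[Hs1 Hs2] := Hs t Ht.
case: ifP => H1.
  rewrite (Hq t Ht); congr (_ - _ *: _).
  move: H1; rewrite /T0 ler_pdivlMr // /ce -natr1 => H1.
  case: (leP (t * M%:R) (M%:R - k%:R)) => ?; case: (leP (t * M%:R) (M%:R - (k%:R + 1))) => ?; lra.
move: H1; rewrite /T0 ler_pdivlMr // => H1.
have H1' : M%:R - k%:R - 1 < t * M%:R by rewrite ltNge H1.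
case: ifP => H2.
  move: H2; rewrite /T1 ler_pdivlMr // => H2.
  rewrite (@refl_step _ _ _ _ _ _ _ _ (ce M k t) (- (t * M%:R) - (k%:R - M%:R + 1)) (Hq t Ht)).
    congr (_ - _ *: _).
    rewrite /ce -natr1 H2.
    case: (leP (t * M%:R) (M%:R - (k%:R + 1))) => ?; lra.
  rewrite HH // HH // /ce T0M H2.
  case: (leP ((M%:R : rat) - k%:R - 1) (M%:R - k%:R)) => ?; lra.
move: H2; rewrite /T1 ler_pdivlMr // => H2.
have H2' : M%:R - k%:R < t * M%:R by rewrite ltNge H2.
rewrite (plus_alpha (Hq t Ht)); congr (_ - _ *: _).
rewrite /ce -natr1 H2.
case: (leP (t * M%:R) (M%:R - (k%:R + 1))) => ?; lra.
Qed.
Lemma iter_f n (A : 'M[int]_n.+1) (a0 : nat) j (mu : wt n) (F : rat -> rat^o)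
  (M : nat) (q : lpath n) :
  A j j = 2 -> mu.1 j = M%:R -> Rf A a0 j mu F M 0 q ->
  forall k, (k <= M)%N -> exists qk, iter_op (f_op A a0 j) k q = Some qk /\
                                     Rf A a0 j mu F M k qk.
Proof.
move=> Ajj Hm H0; elim=> [|k IH] Hk; first by exists q.
have [qk [E Rk]] := IH (ltnW Hk).
have [q' [E' R']] := f_step Ajj Hm Hk Rk.
by exists q'; rewrite /= E /= E'.
Qed.

Lemma iter_e n (A : 'M[int]_n.+1) (a0 : nat) j (mu : wt n) (F : rat -> rat^o)
  (M : nat) (q : lpath n) :
  A j j = 2 -> mu.1 j = - M%:R -> ReP A a0 j mu F M 0 q ->
  forall k, (k <= M)%N -> exists qk, iter_op (e_op A a0 j) k q = Some qk /\
                                     ReP A a0 j mu F M k qk.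
Proof.
move=> Ajj Hm H0; elim=> [|k IH] Hk; first by exists q.
have [qk [E Rk]] := IH (ltnW Hk).
have [q' [E' R']] := e_step Ajj Hm Hk Rk.
by exists q'; rewrite /= E /= E'.
Qed.

Definition Qinv n (mu : wt n) (F : rat -> rat^o) (q : lpath n) : Prop :=
  (forall i, exists z : int, mu.1 i = z%:~R) /\
  forall t, 0 <= t <= 1 -> q t = pth mu F t.

Lemma pth_refl n (A : 'M[int]_n.+1) (a0 : nat) j (mu : wt n) (F : rat -> rat^o) t :
  pth (refl A a0 j mu) F t = pth mu F t - (t * pair_h j mu) *: alpha A a0 j.
Proof. by rewrite /pth /refl scalerBr scalerA addrAC. Qed.

Lemma refl_int n (A : 'M[int]_n.+1) (a0 : nat) j (mu : wt n) :
  (forall i, exists z : int, mu.1 i = z%:~R) ->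
  (forall i, exists z : int, (refl A a0 j mu).1 i = z%:~R).
Proof.
move=> Hz i; have [zi Hi] := Hz i; have [zj Hj] := Hz j.
exists (zi - zj * A i j); rewrite /refl /= !ffunE /= /pair_h Hi Hj.
by rewrite rmorphB rmorphM.
Qed.

Lemma Hfun_Q n (A : 'M[int]_n.+1) (a0 : nat) j (mu : wt n) F (q : lpath n) t :
  A j j = 2 -> Qinv mu F q -> 0 <= t <= 1 -> Hfun j q t = t * mu.1 j.
Proof.
move=> Ajj [_ Hq] Ht.
have E : q t = pth mu F t - 0 *: alpha A a0 j by rewrite scale0r subr0 Hq.
by rewrite (Hfun_form Ajj E) mulr0 subr0.
Qed.

Lemma S_step n (A : 'M[int]_n.+1) (a0 : nat) j (mu : wt n) F (q : lpath n) :
  A j j = 2 -> Qinv mu F q ->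
  exists q', S_op A a0 j q = Some q' /\ Qinv (refl A a0 j mu) F q'.
Proof.
move=> Ajj HQ; have [Hz Hq] := HQ.
have [z Hzj] := Hz j.
have H1 : pair_h j (q 1) = z%:~R.
  by rewrite -/(Hfun j q 1) (Hfun_Q a0 Ajj HQ) ?lexx ?ler01 // mul1r.
rewrite /S_op H1 numq_int.
case: z Hzj H1 => [M|M] Hm _.
- have Hm' : mu.1 j = M%:R by rewrite Hm.
  have R0 : Rf A a0 j mu F M 0 q.
    move=> t /andP[t0 t1]; rewrite Hq ?t0 ?t1 // /cf.
    have : 0 <= t * M%:R by rewrite mulr_ge0 // ler0n.
    case: (leP (t * M%:R) 0%:R) => h1 h2.
      have -> : t * M%:R = 0 by apply/le_anti; rewrite h1 h2.
      by rewrite scale0r subr0.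
    by rewrite scale0r subr0.
  have [qM [E RM]] := iter_f Ajj Hm' R0 (leqnn M).
  exists qM; rewrite /= E; split => //; split; first exact: refl_int.
  move=> t Ht; rewrite RM // pth_refl /pair_h Hm' /cf.
  have -> : t * M%:R <= M%:R by rewrite ler_piMl ?ler0n //; case/andP: Ht.
  by [].
- have Hm' : mu.1 j = - (M.+1)%:R by rewrite Hm NegzE rmorphN.
  have R0 : ReP A a0 j mu F M.+1 0 q.
    move=> t /andP[t0 t1]; rewrite Hq ?t0 ?t1 // /ce subr0.
    have -> : t * M.+1%:R <= M.+1%:R by rewrite ler_piMl ?ler0n.
    by rewrite scale0r subr0.
  have [qM [E RM]] := iter_e Ajj Hm' R0 (leqnn M.+1).
  exists qM; have -> : (0 <= Negz M) = false by []; have -> : `|Negz M|%N = M.+1 by []; rewrite E; split => //; split; first exact: refl_int.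
  move=> t Ht; rewrite RM // pth_refl /pair_h Hm' /ce subrr.
  have : 0 <= t * M.+1%:R by rewrite mulr_ge0 ?ler0n //; case/andP: Ht.
  case: (leP (t * M.+1%:R) 0) => h1 h2; rewrite mulrN; congr (_ - _ *: _); lra.
Qed.
Lemma final_none n (A : 'M[int]_n.+1) (a0 : nat) j (mu : wt n) F (q : lpath n) :
  A j j = 2 -> Qinv mu F q -> e_op A a0 j q = None \/ f_op A a0 j q = None.
Proof.
move=> Ajj HQ.
have HH := fun t => @Hfun_Q _ _ a0 _ _ _ _ t Ajj HQ.
have H01 : 0 <= (1 : rat) <= 1 by apply/andP; split; lra.
have H00 : 0 <= (0 : rat) <= 1 by apply/andP; split; lra.
case: (leP 0 (mu.1 j)) => hm.
- left; rewrite /e_op /minH (@the_min_eq _ 0).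
  + by have -> : (-1 : rat) < 0 by [].
  + by exists 0; rewrite HH // mul0r.
  + move=> y [t [Ht <-]]; rewrite HH //; case/andP: Ht => t0 _.
    by rewrite mulr_ge0.
- right; rewrite /f_op /minH (@the_min_eq _ (mu.1 j)).
  + by rewrite HH // mul1r subrr ltr01.
  + by exists 1; rewrite HH // mul1r.
  + move=> y [t [Ht <-]]; rewrite HH //; case/andP: Ht => t0 t1.
    have : 0 <= (1 - t) * - mu.1 j by apply: mulr_ge0; lra.
    rewrite mulrN mulrBl mul1r; lra.
Qed.

Unset Implicit Arguments.
Theorem lemma2p28 (n : nat) (A : 'M[int]_n.+1) (a0 : nat)
  (HA : affine_GCM A) (Ha0 : kac_a0 A a0)
  (nu : wt n) (Hnu : in_P a0 nu)
  (F : rat -> rat^o) (HF : piecewise_linear F) (HF0 : F 0 = 0)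
  (HF1 : exists z : int, F 1 = z%:~R / a0%:R) :
  extremal A a0 (fun t : rat => t *: nu + F t *: delta n).
Proof.
have Ajj : forall j, A j j = 2 by case: HA => [[H _] _ _].
have Main : forall w q, S_word A a0 w (pth nu F) = Some q -> exists mu, Qinv mu F q.
  elim=> [|j w IH] q /=.
    by case=> <-; exists nu; split => //; case: Hnu.
  case E: (S_word A a0 w (pth nu F)) => [q0|] //= Hs.
  have [mu Hmu] := IH q0 E.
  have [q' [E' HQ']] := S_step a0 (Ajj j) Hmu.
  by exists (refl A a0 j mu); move: Hs; rewrite E' => -[<-].
move=> w j q Hw.
have [mu Hmu] := Main w q Hw.
exact: final_none (Ajj j) Hmu.
Qed.
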